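(* Let $\Phi=(\varphi_n)_{n\in\mathbb{N}}$ be a depth-bounded fuzzy simulation between fuzzy automata $\mathcal{A}$ and $\mathcal{A}'$. Then for every $n\in\mathbb{N}$ and every $(x,x')\in A\times A'$: $\varphi_n(x,x')\le S(\mathbf{L}^{\le n}(\mathcal{A}_x),\mathbf{L}^{\le n}(\mathcal{A}'_{x'}))$ and $\|\varphi_n\|_{\mathcal{A},\mathcal{A}'}\le S(\mathbf{L}^{\le n}(\mathcal{A}),\mathbf{L}^{\le n}(\mathcal{A}'))$.
   Context: $\mathcal{L}=\langle L,\le,\otimes,\Rightarrow,0,1\rangle$ is a complete residuated lattice: $\langle L,\le,0,1\rangle$ is a complete lattice with least element $0$ and greatest element $1$, $\langle L,\otimes,1\rangle$ is a commutative monoid, and $x\otimes y\le z$ iff $x\le (y\Rightarrow z)$. Fuzzy sets/relations are maps into $L$ ordered pointwise; $\varphi^{-1}(b,a)=\varphi(a,b)$; $(\varphi\circ\psi)(a,c)=\bigvee_b\varphi(a,b)\otimes\psi(b,c)$, $(f\circ\varphi)(b)=\bigvee_a f(a)\otimes\varphi(a,b)$, $(\varphi\circ g)(a)=\bigvee_b\varphi(a,b)\otimes g(b)$; for fuzzy sets $g,f$ on the same set, $S(g,f)=\bigwedge_a(g(a)\Rightarrow f(a))$. A fuzzy automaton over $\Sigma$ is $\mathcal{A}=\langle A,\delta^{\mathcal{A}},\sigma^{\mathcal{A}},\tau^{\mathcal{A}}\rangle$ with $A$ nonempty, $\delta^{\mathcal{A}}:A\times\Sigma\times A\to L$, $\sigma^{\mathcal{A}},\tau^{\mathcal{A}}:A\to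 L$; $\delta^{\mathcal{A}}_s(x,y)=\delta^{\mathcal{A}}(x,s,y)$; similarly $\mathcal{A}'$ with states $A'$. $\mathcal{A}_x$ is the automaton differing from $\mathcal{A}$ only in that its initial fuzzy set is $\{x:1\}$ (value $1$ at $x$, $0$ elsewhere). The recognized fuzzy language $\mathbf{L}(\mathcal{A}):\Sigma^*\to L$ is $\mathbf{L}(\mathcal{A})(s_1\cdots s_k)=\sigma^{\mathcal{A}}\circ\delta^{\mathcal{A}}_{s_1}\circ\cdots\circ\delta^{\mathcal{A}}_{s_k}\circ\tau^{\mathcal{A}}$; $\mathbf{L}^{\le n}(\mathcal{A})(w)=\mathbf{L}(\mathcal{A})(w)$ if $|w|\le n$ and $0$ otherwise. $\|\varphi\|_{\mathcal{A},\mathcal{A}'}=S(\sigma^{\mathcal{A}},\sigma^{\mathcal{A}'}\circ\varphi^{-1})$. A depth-bounded fuzzy simulation between $\mathcal{A}$ and $\mathcal{A}'$ is a sequence $(\varphi_n)_{n\in\mathbb{N}}$ of fuzzy relations $A\times A'\to L$ with $\varphi_n\le\varphi_{n-1}$ ($n\ge1$), $\varphi_0^{-1}\circ\tau^{\mathcal{A}}\le\tau^{\mathcal{A}'}$, and $\varphi_n^{-1}\circ\delta^{\mathcal{A}}_s\le\delta^{\mathcal{A}'}_s\circ\varphi_{n-1}^{-1}$ for all $s\in\Sigma$, $n\ge1$. *)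

(* Defs.v *)
From Stdlib Require Import List ClassicalEpsilon.
Import ListNotations.

Set Implicit Arguments.

Record CRL := {
  car :> Type;
  le : car -> car -> Prop;
  le_refl : forall x, le x x;
  le_trans : forall x y z, le x y -> le y z -> le x z;
  le_antisym : forall x y, le x y -> le y x -> x = y;
  sup : (car -> Prop) -> car;
  sup_ub : forall (P : car -> Prop) x, P x -> le x (sup P);
  sup_least : forall (P : car -> Prop) y, (forall x, P x -> le x y) -> le (sup P) y;
  inf : (car -> Prop) -> car;
  inf_lb : forall (P : car -> Prop) x, P x -> le (inf P) x;
  inf_greatest : forall (P : car -> Prop) y, (forall x, P x -> le y x) -> le y (inf P);
  zero : car;
  one : car;
  zero_least : forall x, le zero x;
  one_greatest : forall x, le x one;
  mul : car -> car -> car;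
  mulA : forall x y z, mul x (mul y z) = mul (mul x y) z;
  mulC : forall x y, mul x y = mul y x;
  mul1 : forall x, mul one x = x;
  res : car -> car -> car;
  adj : forall x y z, le (mul x y) z <-> le x (res y z)
}.

Section Fuzzy.
Variable L : CRL.

Definition fset (A : Type) := A -> L.
Definition frel (A B : Type) := A -> B -> L.

Definition fset_le (A : Type) (f g : fset A) : Prop := forall a, le L (f a) (g a).
Definition frel_le (A B : Type) (f g : frel A B) : Prop :=
  forall a b, le L (f a b) (g a b).

Definition finv (A B : Type) (phi : frel A B) : frel B A := fun b a => phi a b.

Definition comp_rr (A B C : Type) (phi : frel A B) (psi : frel B C) : frel A C :=
  fun a c => sup L (fun v => exists b, v = mul L (phi a b) (psi b c)).

Definition comp_sr (A B : Type) (f : fset A) (phi : frel A B) : fset B :=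
  fun b => sup L (fun v => exists a, v = mul L (f a) (phi a b)).

Definition comp_rs (A B : Type) (phi : frel A B) (g : fset B) : fset A :=
  fun a => sup L (fun v => exists b, v = mul L (phi a b) (g b)).

Definition subsethood (A : Type) (g f : fset A) : L :=
  inf L (fun v => exists a, v = res L (g a) (f a)).

Record FA (Sigma : Type) := {
  st : Type;
  st_ne : inhabited st;
  delta : st -> Sigma -> st -> L;
  sigma : fset st;
  tau : fset st
}.

Definition deltas (Sigma : Type) (A : FA Sigma) (s : Sigma) : frel (st A) (st A) :=
  fun x y => delta A x s y.

(** delta_{s1} o ... o delta_{sk} o tau  (a fuzzy set on the states) *)
Fixpoint run (Sigma : Type) (A : FA Sigma) (w : list Sigma) : fset (st A) :=
  match w with
  | [] => tau A
  | s :: w' => comp_rs (deltas A s) (run A w')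
  end.

Definition lang (Sigma : Type) (A : FA Sigma) : fset (list Sigma) :=
  fun w => sup L (fun v => exists a, v = mul L (sigma A a) (run A w a)).

Definition lang_le (Sigma : Type) (n : nat) (A : FA Sigma) : fset (list Sigma) :=
  fun w => if Nat.leb (length w) n then lang A w else zero L.

Definition singleton (A : Type) (x : A) : fset A :=
  fun y => if excluded_middle_informative (y = x) then one L else zero L.

Definition FA_at (Sigma : Type) (A : FA Sigma) (x : st A) : FA Sigma :=
  {| st := st A; st_ne := st_ne A; delta := delta A;
     sigma := singleton x; tau := tau A |}.

Definition fnorm (Sigma : Type) (A A' : FA Sigma) (phi : frel (st A) (st A')) : L :=
  subsethood (sigma A) (comp_sr (sigma A') (finv phi)).

Definition depth_bounded_sim (Sigma : Type) (A A' : FA Sigma)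
    (phi : nat -> frel (st A) (st A')) : Prop :=
  (forall n, frel_le (phi (S n)) (phi n)) /\
  fset_le (comp_rs (finv (phi 0)) (tau A)) (tau A') /\
  (forall (s : Sigma) (n : nat),
      frel_le (comp_rr (finv (phi (S n))) (deltas A s))
              (comp_rr (deltas A' s) (finv (phi n)))).

End Fuzzy.

(* Main.v *)
Require Import Defs.
From Stdlib Require Import List Lia ClassicalEpsilon.
Import ListNotations.

Section H.
Variable L : CRL.

Lemma mul_sup_l (x : L) P z : (forall u, P u -> le L (mul L x u) z) -> le L (mul L x (sup L P)) z.
Proof. intros H. rewrite mulC. apply adj. apply sup_least. intros u Hu. apply adj. rewrite mulC. auto. Qed.

Lemma mulr_mono (x y z : L) : le L x y -> le L (mul L z x) (mul L z y).
Proof. intros H. rewrite (mulC L z x), (mulC L z y). apply adj. eapply le_trans; [exact H|].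
  apply adj. apply le_refl. Qed.

Lemma mull_mono (x y z : L) : le L x y -> le L (mul L x z) (mul L y z).
Proof. intros H. rewrite (mulC L x z), (mulC L y z). now apply mulr_mono. Qed.

Lemma mul0 (x z : L) : le L (mul L x (zero L)) z.
Proof. rewrite mulC. apply adj. apply zero_least. Qed.

Lemma key (Sigma : Type) (A A' : FA L Sigma) (phi : nat -> frel L (st A) (st A')) :
  @depth_bounded_sim L Sigma A A' phi -> forall w n x x', (length w <= n)%nat ->
  le L (mul L (phi n x x') (run A w x)) (run A' w x').
Proof.
  intros [Hm [H0 Hs]]. induction w as [|s w IH]; intros n x x' Hl; simpl.
  - assert (Hn : forall n, le L (phi n x x') (phi 0 x x')).
    { induction n0. apply le_refl. eapply le_trans; [apply Hm|exact IHn0]. }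
    eapply le_trans; [apply mull_mono, Hn|]. eapply le_trans; [|apply H0].
    unfold comp_rs, finv. apply sup_ub. exists x. reflexivity.
  - destruct n as [|m]; [simpl in Hl; lia|]. simpl in Hl.
    unfold comp_rs at 1. apply mul_sup_l. intros u [y ->]. rewrite mulA.
    assert (H1 : le L (mul L (phi (S m) x x') (deltas A s x y))
                   (comp_rr (deltas A' s) (finv (phi m)) x' y)).
    { eapply le_trans; [|apply Hs]. unfold comp_rr, finv. apply sup_ub. exists x. reflexivity. }
    eapply le_trans; [apply mull_mono, H1|]. unfold comp_rr.
    rewrite mulC. apply mul_sup_l. intros v [y' ->].
    rewrite (mulC L _ (mul L _ _)), <- mulA.
    eapply le_trans; [apply mulr_mono, IH; lia|].
    unfold comp_rs. apply sup_ub. exists y'. reflexivity.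
Qed.

Lemma run_at (Sigma : Type) (A : FA L Sigma) x w : run (FA_at A x) w = run A w.
Proof. induction w as [|s w IH]; simpl. reflexivity. rewrite IH. reflexivity. Qed.

End H.

Theorem mainTheorem6 (L : CRL) (Sigma : Type) (A A' : FA L Sigma)
    (phi : nat -> frel L (st A) (st A')) :
  @depth_bounded_sim L Sigma A A' phi ->
  forall n : nat,
    (forall (x : st A) (x' : st A'),
        le L (phi n x x')
           (subsethood (lang_le n (@FA_at L Sigma A x)) (lang_le n (@FA_at L Sigma A' x')))) /\
    le L (@fnorm L Sigma A A' (phi n)) (subsethood (lang_le n A) (lang_le n A')).
Proof.
  intros Hsim n. split.
  - intros x x'. unfold subsethood. apply inf_greatest. intros v [w ->].
    apply adj. unfold lang_le.
    destruct (Nat.leb (length w) n) eqn:E; [|apply mul0].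
    apply PeanoNat.Nat.leb_le in E.
    unfold lang. apply mul_sup_l. intros u [a ->]. simpl.
    unfold singleton at 1. match goal with |- context [excluded_middle_informative ?P] => destruct (excluded_middle_informative P) as [e|ne] end.
    + subst a; rewrite mul1, !run_at. eapply le_trans; [apply (@key L Sigma A A' phi Hsim w n x x' E)|].
      apply sup_ub. exists x'. simpl. unfold singleton.
      destruct (excluded_middle_informative (x' = x')) as [_|c]; [|now exfalso].
      now rewrite mul1.
    + rewrite mulA, (mulC L (phi n x x') (zero L)), <- mulA, mulC. apply mul0.
  - unfold fnorm, subsethood at 2. apply inf_greatest. intros v [w ->].
    apply adj. unfold lang_le.
    destruct (Nat.leb (length w) n) eqn:E; [|apply mul0].
    apply PeanoNat.Nat.leb_le in E.
    unfold lang at 1. apply mul_sup_l. intros u [a ->]. rewrite mulA.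
    assert (H1 : le L (mul L (subsethood (sigma A) (comp_sr (sigma A') (finv (phi n)))) (sigma A a))
                      (comp_sr (sigma A') (finv (phi n)) a)).
    { apply adj. apply inf_lb. exists a. reflexivity. }
    eapply le_trans; [apply mull_mono, H1|]. unfold comp_sr.
    rewrite mulC. apply mul_sup_l. intros v [a' ->]. unfold finv.
    rewrite (mulC L _ (mul L _ _)), <- mulA.
    eapply le_trans; [apply mulr_mono, (@key L Sigma A A' phi Hsim w n a a' E)|].
    unfold lang. apply sup_ub. exists a'. reflexivity.
Qed.
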